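(* Let $G$ be a finite simple graph with $\alpha:=\alpha(G)\ge 2$. Let $C$ be a vertex cover of $G$ such that $S:=V(G)\setminus C$ satisfies $1\le |S|\le \alpha-1$. Let $H:=G(C)$ be the $C$-suspension of $G$. Then $G$ is pseudo-Gorenstein$^{*}$ if and only if $H$ is pseudo-Gorenstein$^{*}$.
   Context: A vertex cover of $G$ is a set $C\subseteq V(G)$ meeting every edge. For $\varnothing\ne C\subseteq V(G)$, the $C$-suspension $G(C)$ is the graph obtained from $G$ by adding a new vertex $z$ adjacent exactly to the vertices of $C$. For a finite simple graph $G$ on vertex set $[N]$, let $R=K[x_1,\dots,x_N]$ ($K$ a field) and $I(G)$ the edge ideal generated by $x_ix_j$, $\{i,j\}\in E(G)$. Let $\alpha(G)$ be the independence number (equal to $\dim R/I(G)$). Write the Hilbert series of $R/I(G)$ uniquely as $(h_0+\dots+h_st^s)/(1-t)^{\alpha(G)}$ with $h_s\ne 0$, and $\mathfrak a(G)=s-\alpha(G)$. $G$ is pseudo-Gorenstein$^{*}$ if $h_s=1$ and $\mathfrak a(G)=0$. *)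

(* Defs.v *)
From mathcomp Require Import all_boot all_order all_algebra.
Set Implicit Arguments. Unset Strict Implicit. Unset Printing Implicit Defensive.
Import GRing.Theory Num.Theory.

(* A finite simple graph on the finite vertex type T is a symmetric,
   irreflexive relation e : rel T (these are hypotheses of the theorem). *)

Definition independent (T : finType) (e : rel T) (A : {set T}) : bool :=
  [forall x in A, forall y in A, ~~ e x y].

Definition alpha (T : finType) (e : rel T) : nat :=
  \max_(A : {set T} | independent e A) #|A|.

Definition vertex_cover (T : finType) (e : rel T) (C : {set T}) : Prop :=
  forall x y, e x y -> (x \in C) || (y \in C).

Definition suspension (T : finType) (e : rel T) (C : {set T}) : rel (option T) :=
  fun u v => match u, v with
             | Some x, Some y => e x y
             | None, Some y => y \in C
             | Some x, None => x \in C
             | None, None => false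
             end.

(* Hilbert function of R/I(G) in degree d: dim_K (R/I(G))_d, i.e. the number of
   monomials x^m of degree d not in the monomial ideal I(G) (standard monomials:
   no edge {x,y} with x_x x_y dividing x^m).  Exponent vectors m : T -> nat with
   sum d; the values are bounded by d, hence typed in 'I_(d.+1). *)
Definition hilb_fun (T : finType) (e : rel T) (d : nat) : nat :=
  #|[set m : {ffun T -> 'I_d.+1} |
      (\sum_(x : T) (m x : nat) == d) &&
      [forall x, forall y, e x y ==> ((m x == 0 :> nat) || (m y == 0 :> nat))]]|.

(* Coefficients of the numerator h(t) = (1-t)^alpha * sum_d H(d) t^d of the
   Hilbert series HS(t) = h(t)/(1-t)^alpha(G). *)
Definition hcoef (T : finType) (e : rel T) (k : nat) : int :=
  (\sum_(j < k.+1)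
     (-1) ^+ j * (('C(alpha e, j) * hilb_fun e (k - j))%N)%:Z)%R.

(* pseudo-Gorenstein^*: the last nonzero coefficient h_s equals 1 and
   a(G) = s - alpha(G) = 0, i.e. s = alpha(G). *)
Definition pseudo_gor_star (T : finType) (e : rel T) : Prop :=
  hcoef e (alpha e) = 1%R /\ (forall k, alpha e < k -> hcoef e k = 0%R).

(* Main.v *)
Require Import Defs.
From mathcomp Require Import all_boot all_order all_algebra.
From mathcomp Require Import ring zify.
Import GRing.Theory Num.Theory.
Local Open Scope ring_scope.
Local Open Scope ring_scope.

Definition agree (n : nat) (p q : {poly int}) := forall i, (i <= n)%N -> p`_i = q`_i.

Lemma agree_mul n p p' q q' : agree n p p' -> agree n q q' -> agree n (p * q) (p' * q').
Proof.
move=> hp hq i hi; rewrite !coefM; apply: eq_bigr => j _.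
rewrite hp ?hq //; first exact: leq_trans (leq_subr j i) hi.
exact: leq_trans (ltnSE (ltn_ord j)) hi.
Qed.

Lemma agree_exp n p q m : agree n p q -> agree n (p ^+ m) (q ^+ m).
Proof.
move=> h; elim: m => [|m IH]; first by move=> i _; rewrite !expr0.
by rewrite !exprS; apply: agree_mul.
Qed.

Lemma agree_trunc n k (P : pred nat) : (n <= k)%N ->
  agree n (\sum_(0 <= j < k.+1 | P j) 'X^j) (\sum_(0 <= j < n.+1 | P j) 'X^j).
Proof.
move=> hnk i hi; rewrite (big_cat_nat _ (n:=n.+1)) //= coefD.
rewrite [X in _ + X]coef_sum [X in _ + X]big_nat_cond [X in _ + X]big1 ?addr0 // => j /andP[/andP[hj _] _].
rewrite coefXn; case: eqP => // eij; subst; by rewrite ltnNge hi in hj.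
Qed.

Lemma coef_1subX n j : ((1 - 'X : {poly int}) ^+ n)`_j = (-1) ^+ j * ('C(n, j))%:Z.
Proof.
elim: n j => [|n IH] j.
  by rewrite expr0 coef1; case: j => [|j] //=; rewrite bin0n mulr0.
rewrite exprSr mulrBr mulr1 coefB coefMX.
case: j => [|j]; first by rewrite /= IH !expr0 !bin0 subr0.
rewrite /= !IH binS PoszD exprS; ring.
Qed.

Lemma telB k : (1 - 'X) * \sum_(0 <= j < k.+1) 'X^j = 1 - 'X^(k.+1) :> {poly int}.
Proof.
elim: k => [|k IH]; first by rewrite big_nat1 expr0 mulr1 expr1.
rewrite big_nat_recr //= mulrDr IH [in RHS]exprS GRing.mulrBl mul1r addrA subrK //.
Qed.

Lemma AeqB k : \sum_(0 <= j < k.+1 | j != 0%N) 'X^j =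
   \sum_(0 <= j < k.+1) 'X^j - 1 :> {poly int}.
Proof.
rewrite big_mkcond /= big_ltn // [in RHS]big_ltn //= expr0 add0r addrC addKr.
by apply: eq_big_nat => i /andP[hi _]; rewrite -lt0n hi.
Qed.

Lemma key k m s : (m.+2 <= k)%N ->
  ((1 - 'X) ^+ (m + 1 + s) * ((\sum_(0 <= j < k.+1 | j != 0%N) 'X^j) *
     (\sum_(0 <= j < k.+1) 'X^j) ^+ s))`_k = 0 :> int.
Proof.
move=> hk.
set B := \sum_(0 <= j < k.+1) 'X^j.
have hA : (1 - 'X) * (\sum_(0 <= j < k.+1 | j != 0%N) 'X^j) = 'X - 'X^(k.+1) :> {poly int}.
  rewrite AeqB mulrBr telB /B; ring.
have -> : (1 - 'X) ^+ (m + 1 + s) * ((\sum_(0 <= j < k.+1 | j != 0%N) 'X^j) * B ^+ s)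
   = (1 - 'X) ^+ m * ((1 - 'X) * (\sum_(0 <= j < k.+1 | j != 0%N) 'X^j)) * ((1 - 'X) * B) ^+ s.
  by rewrite !exprD expr1 exprMn; ring.
rewrite hA /B telB.
have ag : agree k ((1 - 'X) ^+ m * ('X - 'X^(k.+1)) * (1 - 'X^(k.+1)) ^+ s)
                  ((1 - 'X) ^+ m * 'X * 1 ^+ s).
  apply: agree_mul; last apply: agree_exp; first apply: agree_mul.
  - by [].
  - move=> i hi; rewrite coefB [X in _ - X]coefXn.
    have -> : (i == k.+1) = false by apply/eqP; lia.
    by rewrite subr0.
  - move=> i hi; rewrite coefB [X in _ - X]coefXn.
    have -> : (i == k.+1) = false by apply/eqP; lia.
    by rewrite subr0.
rewrite ag // expr1n mulr1 mulrC coefXM.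
have -> : (k == 0%N) = false by apply/eqP; lia.
rewrite coef_1subX bin_small ?mulr0 //; lia.
Qed.
Local Close Scope ring_scope.

Lemma big_opt (R : Type) (idx : R) (op : Monoid.com_law idx) (T : finType)
   (F : option T -> R) :
  \big[op/idx]_(o : option T) F o = op (F None) (\big[op/idx]_(x : T) F (Some x)).
Proof.
rewrite (bigD1 None) //=; congr (op _ _).
rewrite (reindex_omap Some id) //=; last by case.
by apply: eq_bigl => x; rewrite eqxx.
Qed.

Lemma independentP (T : finType) (e : rel T) (A : {set T}) :
  reflect (forall x y, x \in A -> y \in A -> ~~ e x y) (independent e A).
Proof.
apply: (iffP forall_inP) => h.
- by move=> x y xA yA; exact: (forall_inP (h x xA) y yA).
- by move=> x xA; apply/forall_inP => y yA; exact: h.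
Qed.

Lemma alpha_susp {T : finType} {e : rel T} {C : {set T}} :
  2 <= alpha e -> #|~: C| <= alpha e - 1 -> alpha (suspension e C) = alpha e.
Proof.
move=> h2 hS; apply/eqP; rewrite eqn_leq; apply/andP; split.
- apply/bigmax_leqP => B /independentP indB.
  case hN: (None \in B).
  + apply: (@leq_trans #|None |: (Some @: ~: C)|).
      apply: subset_leq_card; apply/subsetP => -[x|] xB; rewrite !inE //.
      apply/orP; right; apply/imsetP; exists x => //; rewrite inE.
      by have := indB None (Some x) hN xB.
    rewrite cardsU1 card_imset; last exact: Some_inj.
    case: (None \notin _); lia.
  + apply: (@leq_trans #|[set x | Some x \in B]|).
      rewrite -[X in _ <= X](card_imset _ (@Some_inj _)).
      apply: subset_leq_card; apply/subsetP => -[x|] xB; last by rewrite hN in xB.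
      by apply/imsetP; exists x => //; rewrite inE.
    apply: leq_bigmax_cond; apply/independentP => x y; rewrite !inE => xB yB.
    exact: indB xB yB.
- apply/bigmax_leqP => A /independentP indA.
  rewrite -(card_imset _ (@Some_inj _)).
  apply: (leq_bigmax_cond (Some @: A)); apply/independentP => u v.
  by move=> /imsetP[x xA ->] /imsetP[y yA ->] /=; apply: indA.
Qed.

Section Hilb.
Variables (T : finType) (e : rel T) (C : {set T}).
Hypothesis vc : vertex_cover e C.

Definition Dset n := [set m : {ffun option T -> 'I_n.+1} |
  (\sum_o (m o : nat) == n) && ((m None : nat) != 0) &&
  [forall x, (x \in C) ==> ((m (Some x) : nat) == 0)]].

Definition Gedge n (m : {ffun option T -> 'I_n.+1}) :=
  [forall x, forall y, e x y ==> ((m (Some x) == 0 :> nat) || (m (Some y) == 0 :> nat))].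
Arguments Gedge {n}.

Lemma Hedge_char n (m : {ffun option T -> 'I_n.+1}) :
  [forall x, forall y, suspension e C x y ==> ((m x == 0 :> nat) || (m y == 0 :> nat))] =
  Gedge m && ((m None == 0 :> nat) || [forall x, (x \in C) ==> ((m (Some x) : nat) == 0)]).
Proof.
apply/idP/idP.
- move=> h; apply/andP; split.
    apply/forallP => x; apply/forallP => y; apply/implyP => exy.
    by move/forallP/(_ (Some x))/forallP/(_ (Some y))/implyP: h; apply.
  case E: (m None == 0 :> nat) => //=.
  apply/forallP => x; apply/implyP => xC.
  by move/forallP/(_ None)/forallP/(_ (Some x))/implyP: h => /(_ xC); rewrite E.
- case/andP => /forallP hG hC.
  apply/forallP => -[x|]; apply/forallP => -[y|]; apply/implyP => //= hxy.
  + by move/forallP/(_ y)/implyP: (hG x); apply.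
  + by case/orP: hC => [->|/forallP/(_ x)/implyP/(_ hxy) ->]; rewrite ?orbT.
  + by case/orP: hC => [->|/forallP/(_ y)/implyP/(_ hxy) ->]; rewrite ?orbT.
Qed.

Lemma Gedge_auto n (m : {ffun option T -> 'I_n.+1}) :
  [forall x, (x \in C) ==> ((m (Some x) : nat) == 0)] -> Gedge m.
Proof.
move/forallP => h; apply/forallP => x; apply/forallP => y; apply/implyP => exy.
case/orP: (vc _ _ exy) => [xC|yC].
- by move/implyP: (h x) => /(_ xC) ->.
- by move/implyP: (h y) => /(_ yC) ->; rewrite orbT.
Qed.

Lemma hilb_susp n : hilb_fun (suspension e C) n = hilb_fun e n + #|Dset n|.
Proof.
rewrite /hilb_fun.
set Hs := [set m : {ffun option T -> 'I_n.+1} | _].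
rewrite -(cardsID [set m : {ffun option T -> 'I_n.+1} | (m None : nat) == 0] Hs).
congr (_ + _).
- pose ext0 (m' : {ffun T -> 'I_n.+1}) : {ffun option T -> 'I_n.+1} :=
    [ffun o => if o is Some x then m' x else ord0].
  have inj : injective ext0.
    move=> m1 m2 h; apply/ffunP => x.
    by have := congr1 (fun f : {ffun option T -> _} => f (Some x)) h; rewrite /ext0 !ffunE.
  rewrite -(card_imset _ inj); apply: eq_card.
  suff key : forall m : {ffun option T -> 'I_n.+1}, (m \in Hs :&: [set m0 : {ffun option T -> 'I_n.+1} | (m0 None : nat) == 0]) = (m \in ext0 @: [set m : {ffun T -> 'I_n.+1} | (\sum_(x : T) (m x : nat) == n) && [forall x, forall y, e x y ==> ((m x == 0 :> nat) || (m y == 0 :> nat))]]) by [].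
  move=> m; rewrite !inE.
  rewrite Hedge_char.
  apply/idP/imsetP.
  + case/andP => /andP[hs /andP[hG _]] h0.
    exists [ffun x => m (Some x)]; last first.
      apply/ffunP => -[x|]; rewrite /ext0 !ffunE //; exact/val_inj/eqP.
    rewrite inE; apply/andP; split.
      move: hs; rewrite big_opt /= (eqP h0) add0n.
      suff -> : \sum_x ([ffun x0 => m (Some x0)] x : nat) = \sum_x (m (Some x) : nat) by [].
      by apply: eq_bigr => x _; rewrite ffunE.
    apply/forallP => x; apply/forallP => y; rewrite !ffunE.
    by move/forallP/(_ x)/forallP/(_ y): hG.
  + case=> m' ; rewrite inE => /andP[hs hG] ->.
    have hsum : \sum_o ((ext0 m') o : nat) = \sum_x (m' x : nat).
      rewrite big_opt /ext0 ffunE /= add0n; apply: eq_bigr => x _; by rewrite ffunE.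
    have hN : (ext0 m' None : nat) = 0 by rewrite /ext0 ffunE.
    rewrite hsum hN hs eqxx /= !andbT.
    apply/forallP => x; apply/forallP => y; rewrite /ext0 !ffunE.
    by move/forallP/(_ x)/forallP/(_ y): hG.
- apply: eq_card => m; rewrite !inE Hedge_char.
  case: (\sum_o (m o : nat) == n) => //=.
  case h0: (m None == 0 :> nat) => //=.
  case hC: [forall x, _] => /=; rewrite ?andbF ?andbT //.
  by apply: Gedge_auto; rewrite hC.
  by case: (_ != _).
Qed.

Local Open Scope ring_scope.

Lemma D_poly n : (#|Dset n|)%:Z = ((\sum_(0 <= j < n.+1 | j != 0%N) 'X^j) *
   (\sum_(0 <= j < n.+1) 'X^j) ^+ #|~: C|)`_n :> int.
Proof.
pose Q : option T -> pred 'I_n.+1 := fun o j =>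
  if o is Some x then (x \notin C) || ((j : nat) == 0%N) else (j : nat) != 0%N.
have hprod : \prod_(o : option T) \sum_(j : 'I_n.+1 | Q o j) ('X^j : {poly int}) =
   (\sum_(0 <= j < n.+1 | j != 0%N) 'X^j) * (\sum_(0 <= j < n.+1) 'X^j) ^+ #|~: C|.
  rewrite big_opt /= !big_mkord; congr (_ * _).
  rewrite (eq_bigr (fun x => if x \notin C then \sum_(j < n.+1) 'X^j else 1)).
    rewrite -big_mkcond prodr_const; congr (_ ^+ _); apply: eq_card => x; by rewrite !inE.
  move=> x _; case: (x \in C) => /=; last by [].
  rewrite (big_pred1 ord0) // => j /=.
rewrite -hprod bigA_distr_big_dep coef_sum.
under eq_bigr do rewrite prodrXr coefXn.
rewrite -sum1_card (big_morph Posz PoszD (erefl 0%:Z)).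
rewrite big_mkcond [RHS]big_mkcond; apply: eq_bigr => f _.
have hfam : (f \in family Q) =
    ((f None : nat) != 0%N) && [forall x, (x \in C) ==> ((f (Some x) : nat) == 0%N)].
  apply/familyP/andP.
  - move=> h; split; first exact: (h None).
    apply/forallP => x; apply/implyP => xC; move: (h (Some x)).
    by rewrite unfold_in /= xC.
  - case=> h0 /forallP hC [x|]; rewrite unfold_in /= //.
    by case xC: (x \in C) => //=; move/implyP: (hC x); apply.
rewrite inE hfam -andbA eq_sym.
case: (_ != _); case: [forall x, _]; rewrite ?andbF //=; by case: eqP.
Qed.

End Hilb.

Arguments agree_mul {n p p' q q'}.
Arguments agree_exp {n p q} m.
Local Open Scope ring_scope.
Lemma extra_zero (T : finType) (C : {set T}) a k :
  (1 <= #|~: C|)%N -> (#|~: C| < a)%N -> (a <= k)%N ->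
  \sum_(j < k.+1) (-1) ^+ j * (('C(a, j) * #|@Dset T C (k - j)|)%N)%:Z = 0 :> int.
Proof.
move=> h1 h2 h3.
have -> : \sum_(j < k.+1) (-1) ^+ j * (('C(a, j) * #|@Dset T C (k - j)|)%N)%:Z =
   \sum_(j < k.+1) ((1 - 'X) ^+ a)`_j *
     ((\sum_(0 <= i < k.+1 | i != 0%N) 'X^i) * (\sum_(0 <= i < k.+1) 'X^i) ^+ #|~: C|)`_(k - j).
  apply: eq_bigr => j _.
  rewrite coef_1subX (agree_mul (@agree_trunc (k - j) k _ (leq_subr j k))
     (agree_exp _ (@agree_trunc (k - j) k _ (leq_subr j k)))) //.
  by rewrite -D_poly PoszM mulrA.
rewrite -coefM.
have -> : a = ((a - #|~: C| - 1) + 1 + #|~: C|)%N by lia.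
apply: key; lia.
Qed.

Local Close Scope ring_scope.
Theorem theorem5p3 (T : finType) (e : rel T)
  (e_sym : symmetric e) (e_irr : irreflexive e) (C : {set T}) :
  2 <= alpha e ->
  vertex_cover e C ->
  1 <= #|~: C| <= alpha e - 1 ->
  (pseudo_gor_star e <-> pseudo_gor_star (suspension e C)).
Proof.
move=> h2 vc /andP[h1 hS].
have ha := alpha_susp (C:=C) h2 hS.
have hc : forall k, (alpha e <= k)%N -> hcoef (suspension e C) k = hcoef e k.
  move=> k hk; rewrite /hcoef ha.
  under eq_bigr do rewrite (@hilb_susp T e C vc) mulnDr PoszD mulrDr.
  rewrite big_split /= extra_zero ?addr0 //; lia.
rewrite /pseudo_gor_star ha; split => -[h3 h4]; split.
- by rewrite hc.
- by move=> k hk; rewrite hc ?h4 // ltnW.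
- by rewrite -hc.
- by move=> k hk; rewrite -hc ?h4 // ltnW.
Qed.
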